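(* Let $G=(V,E)$ be an $n$-vertex graph of maximum degree $\Delta$ with $V=A\cup B$, $A\cap B=\emptyset$, and let $d\ge1$ be such that every vertex of $A$ has degree at most $d$ in $G$. Suppose that the induced subgraph $G(A)$ is given a proper edge coloring with $O(d)$ colors and the induced subgraph $G(B)$ is given a proper edge coloring with $\Delta+O(d)$ colors (colors taken from a common palette). Then a proper edge coloring of all of $G$ using $\Delta+O(d)$ colors can be computed by a deterministic distributed algorithm in the LOCAL model within $O(d)$ rounds.
   Context: LOCAL model: the input graph is the communication network; each vertex is a processor with a unique ID of $O(\log n)$ bits and unbounded local computation; computation proceeds in synchronous rounds, in each of which every vertex may send a message of arbitrary size to each neighbor; running time is the number of rounds until all vertices terminate. Global parameters ($\Delta$, $d$) are known to all vertices, and each vertex knows whether it is in $A$ or $B$. In an edge coloring, edges sharing an endpoint receive distinct colors, and both endpoints of an edge know its color. *)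

(* Defs.v *)
From mathcomp Require Import all_boot.
Set Implicit Arguments. Unset Strict Implicit. Unset Printing Implicit Defensive.

Definition simple_graph (T : finType) (e : rel T) : Prop :=
  symmetric e /\ irreflexive e.

Definition deg (T : finType) (e : rel T) (v : T) : nat := #|[pred w | e v w]|.

Definition max_deg (T : finType) (e : rel T) : nat := \max_(v : T) deg e v.

(* A deterministic LOCAL algorithm in full-information form.  Every vertex
   holds a state of arbitrary type; initially it knows the global parameters
   Delta and d, its own ID, whether it lies in A, and for each incident edge
   the ID of the other endpoint together with the input color of that edge
   (Some c if the edge lies in G(A) or G(B), None if it joins A and B).
   In each round every vertex sends its whole state (messages of arbitrary
   size) to all neighbours and updates its state from the received states.
   After the rounds, [lout s j] is the color the vertex assigns to its edge
   towards the neighbour with ID j. *)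
Record LocalAlg := {
  lstate : Type;
  linit : nat -> nat -> nat -> bool -> seq (nat * option nat) -> lstate;
  lstep : lstate -> seq lstate -> lstate;
  lout : lstate -> nat -> nat
}.

Section Run.
Variables (alg : LocalAlg) (T : finType) (e : rel T) (Delta d : nat)
          (inA : pred T) (id : T -> nat) (col : T -> T -> nat).

Definition in_color (v w : T) : option nat :=
  if inA v == inA w then Some (col v w) else None.

Fixpoint run (r : nat) (v : T) : lstate alg :=
  match r with
  | 0 => @linit alg Delta d (id v) (inA v)
                 [seq (id w, in_color v w) | w <- enum [pred w | e v w]]
  | r'.+1 => @lstep alg (run r' v) [seq run r' w | w <- enum [pred w | e v w]]
  end.

Definition out_color (r : nat) (v w : T) : nat := @lout alg (run r v) (id w).
End Run.

Definition proper_on (T : finType) (e : rel T) (P : pred T)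
    (c : T -> T -> nat) (k : nat) : Prop :=
  (forall u v, P u -> P v -> e u v -> c u v = c v u /\ c u v < k) /\
  (forall u v w, P u -> P v -> P w -> e u v -> e u w -> v != w ->
     c u v != c u w).

(* Main.v *)
Require Import Defs.
From mathcomp Require Import all_boot.
From mathcomp Require Import zify.
Set Implicit Arguments. Unset Strict Implicit. Unset Printing Implicit Defensive.

Record st := St { sD : nat; sd : nat; sid : nat; sA : bool;
  snb : seq (nat * option nat); sr : nat; sc : nat -> option nat }.

Fixpoint lk (j : nat) (nb : seq (nat * option nat)) : option nat :=
  match nb with [::] => None | (k, o) :: t => if k == j then o else lk j t end.

Definition pickc (F : seq nat) : nat :=
  find (fun c => c \notin F) (iota 0 (size F).+1).

Definition idx (t : st) (jb : nat) : nat :=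
  index jb [seq x.1 | x <- snb t & x.2 == None].

Fixpoint copyf (i j : nat) (ns : seq st) : option nat :=
  match ns with
  | [::] => None
  | t :: ns' => if (sid t == j) && ~~ sA t then sc t i else copyf i j ns'
  end.

Definition upd (s : st) (f : nat -> option nat) (t : st) : nat -> option nat :=
  if sA t && ((idx t (sid s)).*2 == sr s) && (f (sid t) == None) then
    let c := pickc (pmap f (map fst (snb s)) ++ pmap (sc t) (map fst (snb t))) in
    fun j => if j == sid t then Some c else f j
  else f.

Definition step (s : st) (ns : seq st) : st :=
  St (sD s) (sd s) (sid s) (sA s) (snb s) (sr s).+1
     (if sA s then (fun j => copyf (sid s) j ns) else foldl (upd s) (sc s) ns).

Definition out (cB : nat) (s : st) (j : nat) : nat :=
  if sA s then
    match lk j (snb s) with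
    | Some c => sD s + cB.+2 * sd s + c
    | None => odflt 0 (sc s j)
    end
  else odflt 0 (sc s j).

Definition alg (cB : nat) : LocalAlg :=
  {| lstate := st;
     linit := fun D dd i a nb => St D dd i a nb 0 (fun j => if a then None else lk j nb);
     lstep := step; lout := out cB |}.

Lemma pickcP F : pickc F \notin F /\ pickc F <= size F.
Proof.
have hs : has (fun c => c \notin F) (iota 0 (size F).+1).
  apply/negPn/negP => /hasPn H.
  suff : size (iota 0 (size F).+1) <= size F by rewrite size_iota ltnn.
  apply: uniq_leq_size; first exact: iota_uniq.
  by move=> x /H; rewrite negbK.
have hf := has_find (fun c => c \notin F) (iota 0 (size F).+1).
rewrite hs size_iota in hf.
have := nth_find 0 hs.
rewrite nth_iota // add0n => ->; split => //.
Qed.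

Section Proof.
Variables (cB : nat) (T : finType) (e : rel T) (Delta d : nat) (inA : pred T)
  (id : T -> nat) (col : T -> T -> nat).
Hypothesis Hid : injective id.

Definition R r v : st := run (alg cB) e Delta d inA id col r v.
Definition N v := enum [pred w | e v w].
Definition nbl v := [seq (id w, in_color inA col v w) | w <- N v].
Definition S r v := sc (R r v).

Lemma R0 v : R 0 v = St Delta d (id v) (inA v) (nbl v) 0
   (fun j => if inA v then None else lk j (nbl v)).
Proof. by []. Qed.

Lemma RS r v : R r.+1 v = step (R r v) (map (R r) (N v)).
Proof. by []. Qed.

Lemma Rf r v : [/\ sid (R r v) = id v, sA (R r v) = inA v,
   snb (R r v) = nbl v & sr (R r v) = r].
Proof. elim: r => [|r [h1 h2 h3 h4]]; first by []. by rewrite RS /= h1 h2 h3 h4. Qed.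

Lemma lk_map (f : T -> option nat) s w :
  lk (id w) [seq (id x, f x) | x <- s] = if w \in s then f w else None.
Proof.
elim: s => [|x s IH] //=; rewrite in_cons (inj_eq Hid) eq_sym.
by case: eqP => [->|_] //.
Qed.

Lemma lk_nbl v w : lk (id w) (nbl v) = if w \in N v then in_color inA col v w else None.
Proof. exact: lk_map. Qed.

Lemma copyf_map i r s w : copyf i (id w) (map (R r) s) =
  if (w \in s) && ~~ inA w then S r w i else None.
Proof.
elim: s => [|x s IH] //=; rewrite in_cons.
case: (Rf r x) => -> -> _ _; rewrite (inj_eq Hid) IH.
case: eqP => [->|ne] /=; first by rewrite eqxx /=; case: (inA w); rewrite ?andbF.
by rewrite (_ : (w == x) = false) //; apply/eqP => h; apply: ne.
Qed.

Definition cross a := [seq x <- N a | ~~ inA x].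
Definition ix a b := index b (cross a).

Lemma idxR r a b : inA a -> idx (R r a) (id b) = ix a b.
Proof.
move=> ha; rewrite /idx; case: (Rf r a) => _ _ -> _.
rewrite /nbl /ix /cross filter_map -map_comp.
rewrite (_ : [seq _ | _ <- _] = map id (filter (fun x => ~~ inA x) (N a))); last first.
  congr map; apply: eq_filter => x /=; rewrite /in_color ha; by case: (inA x).
by rewrite (index_map Hid).
Qed.

Lemma fst_nbl v : map fst (nbl v) = map id (N v).
Proof. by rewrite /nbl -map_comp. Qed.

Hypothesis HD : max_deg e = Delta.
Hypothesis Hd : 1 <= d.
Hypothesis HdA : forall v, inA v -> deg e v <= d.

Definition M := Delta + cB.+2 * d.

Lemma sizeN v : size (N v) = deg e v.
Proof. by rewrite /N /deg -cardE. Qed.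

Lemma degD v : deg e v <= Delta.
Proof. rewrite -HD /max_deg. exact: (@leq_bigmax T (fun v => deg e v) v). Qed.

Lemma size_pmap_le (f : nat -> option nat) s : size (pmap f s) <= size s.
Proof. by rewrite size_pmap count_size. Qed.

Lemma in_pmap (f : nat -> option nat) s j c : j \in s -> f j = Some c -> c \in pmap f s.
Proof. by move=> hj hf; rewrite mem_pmap; apply/mapP; exists j. Qed.

Lemma upd_some s t f j c : f j = Some c -> upd s f t j = Some c.
Proof.
move=> h; rewrite /upd; case: ifP => // /andP [_ /eqP hn] /=.
by case: eqP => // ej; rewrite -ej h in hn.
Qed.

Lemma fold_some s ts f j c : f j = Some c -> foldl (upd s) f ts j = Some c.
Proof. by elim: ts f => [|t ts IH] f //= h; apply: IH; apply: upd_some. Qed.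

Section Fold.
Variables (r : nat) (b : T).
Hypothesis hb : ~~ inA b.

Definition cond w := inA w && ((ix w b).*2 == r).
Definition FA w := pmap (S r w) (map id (N w)).

Lemma upd_eq f w : w \in N b -> upd (R r b) f (R r w) =
  if cond w && (f (id w) == None) then
    (fun j => if j == id w then Some (pickc (pmap f (map id (N b)) ++ FA w)) else f j)
  else f.
Proof.
move=> hw; rewrite /upd /cond.
case: (Rf r b) => -> _ -> ->; case: (Rf r w) => -> -> -> _.
rewrite fst_nbl; case hA: (inA w) => //=.
by rewrite idxR // fst_nbl.
Qed.

Definition Q (f0 f : nat -> option nat) :=
  (forall w, w \in N b -> f (id w) != f0 (id w) ->
     [/\ cond w, f0 (id w) = None & exists c, f (id w) = Some c /\ c < M /\ c \notin FA w]) /\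
  (forall w1 w2 c1 c2, w1 \in N b -> w2 \in N b -> w1 != w2 ->
     f (id w1) = Some c1 -> f (id w2) = Some c2 -> c1 != c2).

Lemma Q_upd f0 f w : w \in N b -> Q f0 f -> Q f0 (upd (R r b) f (R r w)).
Proof.
move=> hw [Q1 Q2]; rewrite upd_eq //.
case: ifP => [/andP [hc /eqP hn] | _]; last by split.
set F := pmap f (map id (N b)) ++ FA w.
have [hF hsF] := pickcP F.
have hsz : size F <= Delta + d.
  rewrite size_cat; apply: leq_add.
    by apply: leq_trans (size_pmap_le _ _) _; rewrite size_map sizeN degD.
  apply: leq_trans (size_pmap_le _ _) _; rewrite size_map sizeN.
  by apply: HdA; case/andP: hc.
have hM : pickc F < M.
  rewrite /M; apply: leq_ltn_trans hsF _; apply: leq_ltn_trans hsz _.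
  rewrite -addnS leq_add2l; rewrite mulSn; lia.
split.
- move=> w' hw'; rewrite (inj_eq Hid).
  have [-> _ | ne] := eqVneq w' w.
  + idtac.
    have h0 : f0 (id w) = None.
      case E: (f0 (id w)) => [c0|] //.
      have := Q1 w hw; rewrite hn E => /(_ isT) [_ -> _] //.
    split => //; exists (pickc F); split => //; split => //.
    by apply: contra hF; rewrite mem_cat => ->; rewrite orbT.
  + exact: Q1.
- move=> w1 w2 c1 c2 h1 h2 ne12; rewrite !(inj_eq Hid).
  have [e1|n1] := eqVneq w1 w; have [e2|n2] := eqVneq w2 w.
  + by rewrite e1 e2 eqxx in ne12.
  + move=> /= -[<-] h; apply/negP => /eqP ec; move: hF.
    by rewrite mem_cat ec (in_pmap (map_f id h2) h).
  + move=> /= h -[<-]; apply/negP => /eqP ec; move: hF.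
    by rewrite mem_cat -ec (in_pmap (map_f id h1) h).
  + exact: Q2.
Qed.

Lemma fold_Q L f0 f : {subset L <= N b} -> Q f0 f ->
  Q f0 (foldl (fun g w => upd (R r b) g (R r w)) f L) /\
  (forall w, w \in L -> cond w -> foldl (fun g w => upd (R r b) g (R r w)) f L (id w) != None).
Proof.
elim: L f => [|w L IH] f hL hQ //=.
have hw : w \in N b by apply: hL; rewrite mem_head.
have hL' : {subset L <= N b} by move=> x hx; apply: hL; rewrite in_cons hx orbT.
have [hQ' hP] := IH _ hL' (Q_upd hw hQ).
split => // w' ; rewrite in_cons => /orP [/eqP -> | hw'] hc; last exact: hP.
case E: (upd (R r b) f (R r w) (id w)) => [c|].
  suff H : forall L0 g, g (id w) = Some c ->
      foldl (fun g w => upd (R r b) g (R r w)) g L0 (id w) = Some c by rewrite (H _ _ E).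
  by elim=> [|x L0 IHL] g hg //=; apply: IHL; apply: upd_some.
move: E; rewrite upd_eq // hc /=; case: eqP => hn; last by case: (f (id w)) hn.
by rewrite eqxx.
Qed.
End Fold.

Lemma RDd r v : sD (R r v) = Delta /\ sd (R r v) = d.
Proof. elim: r => [|r [h1 h2]]; first by []. by rewrite RS /= h1 h2. Qed.

Hypothesis He : simple_graph e.
Hypothesis HpB : proper_on e (predC inA) col (Delta + cB * d).

Lemma memN v w : (w \in N v) = e v w.
Proof. by rewrite /N mem_enum. Qed.

Lemma Nsym v w : (w \in N v) = (v \in N w).
Proof. by rewrite !memN; case: He => hs _; rewrite hs. Qed.

Lemma NsymP v w : w \in N v -> v \in N w.
Proof. by rewrite Nsym. Qed.

Lemma SA r a w : inA a -> S r.+1 a (id w) = if (w \in N a) && ~~ inA w then S r w (id a) else None.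
Proof.
move=> ha; rewrite /S RS /step; case: (Rf r a) => -> -> _ _; rewrite ha /=.
exact: copyf_map.
Qed.

Lemma fold_some2 s (h : T -> st) ts f j c : f j = Some c ->
  foldl (fun g x => upd s g (h x)) f ts j = Some c.
Proof. by elim: ts f => [|t ts IH] f //= hf; apply: IH; apply: upd_some. Qed.

Lemma foldl_mapX (A B C : Type) (f : A -> B -> A) (g : C -> B) z s :
  foldl f z (map g s) = foldl (fun a x => f a (g x)) z s.
Proof. by elim: s z => [|x s IH] z //=. Qed.

Lemma SB r b : ~~ inA b -> S r.+1 b = foldl (fun g w => upd (R r b) g (R r w)) (S r b) (N b).
Proof.
move=> hb; rewrite /S RS /step; case: (Rf r b) => _ -> _ _; rewrite (negbTE hb) /=.
by rewrite foldl_mapX.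
Qed.

Lemma Sstab r b j c : ~~ inA b -> S r b j = Some c -> S r.+1 b j = Some c.
Proof. by move=> hb h; rewrite SB //; apply: fold_some2. Qed.

Lemma S0 b w : ~~ inA b -> w \in N b -> S 0 b (id w) = in_color inA col b w.
Proof. by move=> hb hw; rewrite /S R0 /= (negbTE hb) lk_nbl hw. Qed.

Definition J1 r := forall b w, ~~ inA b -> w \in N b -> ~~ inA w -> S r b (id w) = Some (col b w).
Definition J2 r := forall b a, ~~ inA b -> a \in N b -> inA a -> (S r b (id a) == None) = (r <= (ix a b).*2).
Definition J3 r := forall b a c, ~~ inA b -> a \in N b -> inA a -> S r b (id a) = Some c -> c < M.
Definition J4 r := forall b w1 w2 c1 c2, ~~ inA b -> w1 \in N b -> w2 \in N b -> w1 != w2 ->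
   S r b (id w1) = Some c1 -> S r b (id w2) = Some c2 -> c1 != c2.
Definition J5 r := forall a b1 b2 c1 c2, inA a -> b1 \in N a -> b2 \in N a -> b1 != b2 ->
   ~~ inA b1 -> ~~ inA b2 -> S r b1 (id a) = Some c1 -> S r b2 (id a) = Some c2 -> c1 != c2.

Lemma step_facts r b : J4 r -> ~~ inA b ->
  (forall w, w \in N b -> S r.+1 b (id w) != S r b (id w) ->
     [/\ cond r b w, S r b (id w) = None & exists c, S r.+1 b (id w) = Some c /\ c < M /\ c \notin FA r w]) /\
  (forall w1 w2 c1 c2, w1 \in N b -> w2 \in N b -> w1 != w2 ->
     S r.+1 b (id w1) = Some c1 -> S r.+1 b (id w2) = Some c2 -> c1 != c2) /\
  (forall w, w \in N b -> cond r b w -> S r.+1 b (id w) != None).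
Proof.
move=> h4 hb.
have hQ : Q r b (S r b) (S r b).
  split; first by move=> w _; rewrite eqxx.
  by move=> w1 w2 c1 c2 h1 h2 h12; apply: h4.
have [[Q1 Q2] P] := fold_Q hb (L := N b) (fun x h => h) hQ.
rewrite SB //; split => //.
Qed.

Lemma Inv1 r : [/\ J1 r, J2 r, J3 r & J4 r].
Proof.
elim: r => [|r [h1 h2 h3 h4]].
  split.
  - by move=> b w hb hw hw'; rewrite S0 // /in_color (negbTE hb) (negbTE hw').
  - by move=> b a hb ha haA; rewrite S0 // /in_color (negbTE hb) haA.
  - by move=> b a c hb ha haA; rewrite S0 // /in_color (negbTE hb) haA.
  - move=> b w1 w2 c1 c2 hb h1 h2 h12; rewrite !S0 // /in_color (negbTE hb).
    case: ifP => // /eqP a1 [<-]; case: ifP => // /eqP a2 [<-].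
    case: HpB => _ P; apply: P => //=; rewrite -?a1 -?a2 -?memN //.
split.
- move=> b w hb hw hw'.
  have [F1 [_ _]] := step_facts h4 hb.
  case E: (S r.+1 b (id w) != S r b (id w)).
    by case: (F1 w hw E) => /andP [hA _]; rewrite hA in hw'.
  by move/negbFE/eqP: E => ->; apply: h1.
- move=> b a hb ha haA.
  have [F1 [_ F3]] := step_facts h4 hb.
  case hc: (cond r b a).
    move: (F3 a ha hc) => /negbTE ->.
    by move: hc; rewrite /cond haA /= => /eqP ->; rewrite ltnn.
  case E: (S r.+1 b (id a) != S r b (id a)).
    by case: (F1 a ha E); rewrite hc.
  move/negbFE/eqP: E => ->; rewrite h2 //.
  move: hc; rewrite /cond haA /= => /negbT hne.
  by rewrite leq_eqVlt eq_sym (negbTE hne).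
- move=> b a c hb ha haA hS.
  have [F1 [_ _]] := step_facts h4 hb.
  case E: (S r.+1 b (id a) != S r b (id a)).
    by case: (F1 a ha E) => _ _ [c' [hc' [hM _]]]; move: hS; rewrite hc' => [[<-]].
  by move/negbFE/eqP: E => E; rewrite E in hS; apply: (h3 b a).
- move=> b w1 w2 c1 c2 hb; have [_ [F2 _]] := step_facts h4 hb; exact: F2.
Qed.

Lemma cross_mem a b : (b \in cross a) = ~~ inA b && (b \in N a).
Proof. by rewrite /cross mem_filter. Qed.

Lemma ix_inj a b1 b2 : b1 \in cross a -> b2 \in cross a -> ix a b1 = ix a b2 -> b1 = b2.
Proof.
move=> h1 h2 h; rewrite -(nth_index b1 h1) -(nth_index b1 h2).
by rewrite /ix in h; rewrite h.
Qed.

Lemma ix_lt a b : inA a -> ~~ inA b -> b \in N a -> ix a b < d.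
Proof.
move=> ha hb hn; apply: leq_trans (HdA ha); rewrite -sizeN.
apply: leq_trans (_ : size (cross a) <= _); first by rewrite index_mem cross_mem hb.
by rewrite /cross size_filter count_size.
Qed.

Lemma Inv5 r : J5 r.
Proof.
elim: r => [|r IH].
  move=> a b1 b2 c1 c2 ha h1 h2 _ hb1 _; rewrite S0 // ?(Nsym b1) // /in_color ha.
  by rewrite (negbTE hb1).
move=> a b1 b2 c1 c2 ha h1 h2 h12 hb1 hb2.
case: (Inv1 r) => _ j2 _ j4.
have key : forall b1 b2 c1 c2, b1 \in N a -> b2 \in N a -> b1 != b2 -> ~~ inA b1 -> ~~ inA b2 ->
   S r.+1 b1 (id a) = Some c1 -> S r.+1 b2 (id a) = Some c2 ->
   S r.+1 b2 (id a) != S r b2 (id a) -> c1 != c2.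
  move=> {h1 h2 h12 hb1 hb2 c1 c2 b1 b2} b1 b2 c1 c2 h1 h2 h12 hb1 hb2 e1 e2 E.
  have [F1 [_ _]] := step_facts j4 hb2.
  have [hc h0 [c [hc2 [_ hF]]]] := F1 a (NsymP h2) E.
  move: hc; rewrite /cond ha /= => /eqP hix.
  have [F1' [_ _]] := step_facts j4 hb1.
  case E1: (S r.+1 b1 (id a) != S r b1 (id a)).
    case: (F1' a (NsymP h1) E1); rewrite /cond ha /= => /eqP hix1 _ _.
    have := ix_inj (b1 := b1) (b2 := b2) (a := a); rewrite !cross_mem hb1 hb2 h1 h2.
    by move=> /(_ isT isT); rewrite -hix1 in hix; move=> /(_ (esym (double_inj hix))) eb; rewrite eb eqxx in h12.
  move/negbFE/eqP: E1 => E1; rewrite E1 in e1.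
  have hlt : (ix a b1).*2 < r.
    have := j2 b1 a hb1 (NsymP h1) ha; rewrite e1 /= => /esym/negbT; by rewrite -ltnNge.
  have hlt2 : (ix a b1) < (ix a b2).
    by rewrite -ltn_double hix.
  have hr : (ix a b1).*2 < r.-1.
    rewrite -hix; move: hlt2; rewrite -!muln2; lia.
  have [r' er] : exists r', r = r'.+1 by exists r.-1; rewrite prednK //; apply: leq_ltn_trans hlt.
  rewrite er /= in hr.
  have [j1' j2' j3' j4'] := Inv1 r'.
  have := j2' b1 a hb1 (NsymP h1) ha; rewrite leqNgt hr /=.
  case E': (S r' b1 (id a)) => [c'|] // _.
  have hst := Sstab hb1 E'; rewrite -er e1 in hst; case: hst => ec.
  have hin : c1 \in FA r a.
    apply: (in_pmap (j := id b1)); first by apply: map_f.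
    by rewrite er SA // h1 hb1 E' ec.
  move: hc2; rewrite e2 => -[ec2]; apply/negP => /eqP ec12; move: hF.
  by rewrite -ec2 -ec12 hin.
case E2: (S r.+1 b2 (id a) != S r b2 (id a)).
  move=> e1 e2; exact: (key b1 b2 c1 c2 h1 h2 h12 hb1 hb2 e1 e2 E2).
case E1: (S r.+1 b1 (id a) != S r b1 (id a)).
  move=> e1 e2; rewrite eq_sym; apply: (key b2 b1 c2 c1 h2 h1 _ hb2 hb1 e2 e1 E1).
  by rewrite eq_sym.
move/negbFE/eqP: E1 => E1; move/negbFE/eqP: E2 => E2.
by rewrite E1 E2; apply: IH.
Qed.

Lemma cross_final b a : ~~ inA b -> a \in N b -> inA a ->
  exists c, [/\ S (2 * d).-1 b (id a) = Some c, S (2 * d) b (id a) = Some c & c < M].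
Proof.
move=> hb ha haA.
have hlt := ix_lt haA hb (NsymP ha).
case: (Inv1 (2 * d).-1) => _ j2 j3 _.
have := j2 b a hb ha haA.
have -> : ((2 * d).-1 <= (ix a b).*2) = false.
  apply/negbTE; rewrite -ltnNge; rewrite -muln2; lia.
case E: (S (2 * d).-1 b (id a)) => [c|] // _.
exists c; split => //; last exact: (j3 b a c).
have := Sstab hb E; rewrite prednK //; lia.
Qed.

Definition O u v := out cB (R (2 * d) u) (id v).

Lemma S2d a w : inA a -> S (2 * d) a (id w) = if (w \in N a) && ~~ inA w then S (2 * d).-1 w (id a) else None.
Proof. by move=> ha; rewrite -SA // prednK //; lia. Qed.

Lemma Oval u v : v \in N u ->
  [/\ inA u -> inA v -> O u v = M + col u v,
      ~~ inA u -> O u v = odflt 0 (S (2 * d) u (id v)) &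
      inA u -> ~~ inA v -> O u v = odflt 0 (S (2 * d).-1 v (id u))].
Proof.
move=> hv; rewrite /O /out; case: (Rf (2 * d) u) => _ -> -> _; case: (RDd (2 * d) u) => -> ->.
rewrite lk_nbl hv /in_color.
split.
- by move=> -> ->; rewrite /M addnA.
- by move=> /negbTE ->.
- move=> hu hv'; rewrite hu (negbTE hv') /=.
  by rewrite -/(S (2 * d) u (id v)) S2d // hv hv'.
Qed.

Lemma OB u x : ~~ inA u -> x \in N u -> S (2 * d) u (id x) = Some (O u x).
Proof.
move=> hu hx; case: (Oval hx) => _ hO _; rewrite hO //.
case hxA: (inA x).
  by have [c [_ -> _]] := cross_final hu hx hxA.
by case: (Inv1 (2 * d)) => j1 _ _ _; rewrite (j1 u x hu hx) ?hxA.
Qed.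

Lemma OAB u x : inA u -> x \in N u -> ~~ inA x ->
  S (2 * d).-1 x (id u) = Some (O u x) /\ O u x < M.
Proof.
move=> hu hx hxA; case: (Oval hx) => _ _ -> //.
by have [c [-> _ hc]] := cross_final hxA (NsymP hx) hu.
Qed.

Variable cA : nat.
Hypothesis HpA : proper_on e inA col (cA * d).

Lemma final :
  (forall u v, e u v -> O u v = O v u /\ O u v < Delta + (cB.+2 + cA) * d) /\
  (forall u v w, e u v -> e u w -> v != w -> O u v != O u w).
Proof.
have bM : M <= Delta + (cB.+2 + cA) * d by rewrite /M mulnDl addnA leq_addr.
split.
- move=> u v huv; have hv : v \in N u by rewrite memN.
  have hu : u \in N v by rewrite memN; case: He => hs _; rewrite hs.
  case hA: (inA u); case hB: (inA v).
  + case: (Oval hv) => -> // _ _; case: (Oval hu) => -> // _ _.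
    case: HpA => P _; case: (P u v hA hB huv) => -> hl; split => //.
    move: hl bM; rewrite /M mulnDl; lia.
  + have [h1 h2] := OAB hA hv (negbT hB).
    have h3 := OB (negbT hB) hu.
    have := Sstab (negbT hB) h1; rewrite prednK; last lia.
    rewrite h3 => -[ee]; rewrite ee; split => //; exact: leq_trans h2 bM.
  + have [h1 h2] := OAB hB hu (negbT hA).
    have h3 := OB (negbT hA) hv.
    have := Sstab (negbT hA) h1; rewrite prednK; last lia.
    rewrite h3 => -[ee]; rewrite ee; split => //; exact: leq_trans h2 bM.
  + case: (Oval hv) => _ o1 _; case: (Oval hu) => _ o2 _.
    rewrite o1 ?hA // o2 ?hB //.
    case: (Inv1 (2 * d)) => j1 _ _ _.
    rewrite (j1 u v) ?hA ?hB // (j1 v u) ?hA ?hB //=.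
    case: HpB => P _; case: (P u v) => //=; [by rewrite hA | by rewrite hB | ] => -> hl.
    split => //; apply: leq_trans hl _; rewrite leq_add2l; apply: leq_mul => //; lia.
- move=> u v w huv huw nvw.
  have hv : v \in N u by rewrite memN.
  have hw : w \in N u by rewrite memN.
  case hA: (inA u).
  + case hvA: (inA v); case hwA: (inA w).
    * case: (Oval hv) => -> // _ _; case: (Oval hw) => -> // _ _.
      case: HpA => _ P; by rewrite eqn_add2l; apply: P.
    * have [_ h2] := OAB hA hw (negbT hwA).
      case: (Oval hv) => -> // _ _; apply/eqP => h; move: h2; rewrite -h; lia.
    * have [_ h2] := OAB hA hv (negbT hvA).
      case: (Oval hw) => -> // _ _; apply/eqP => h; move: h2; rewrite h; lia.
    * have [h1 _] := OAB hA hv (negbT hvA).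
      have [h2 _] := OAB hA hw (negbT hwA).
      exact: (Inv5 hA hv hw nvw (negbT hvA) (negbT hwA) h1 h2).
  + case: (Inv1 (2 * d)) => _ _ _ j4.
    exact: (j4 u v w _ _ (negbT hA) hv hw nvw (OB (negbT hA) hv) (OB (negbT hA) hw)).
Qed.
End Proof.

Theorem mainTheorem11 :
  forall cA cB : nat,
  exists (Ccol Crounds : nat) (alg : LocalAlg),
  forall (T : finType) (e : rel T) (Delta d : nat) (inA : pred T)
         (id : T -> nat) (col : T -> T -> nat),
    simple_graph e ->
    max_deg e = Delta ->
    1 <= d ->
    (forall v, inA v -> deg e v <= d) ->
    injective id ->
    proper_on e inA col (cA * d) ->
    proper_on e (predC inA) col (Delta + cB * d) ->
    let c := out_color alg e Delta d inA id col (Crounds * d) in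
    (forall u v, e u v -> c u v = c v u /\ c u v < Delta + Ccol * d) /\
    (forall u v w, e u v -> e u w -> v != w -> c u v != c u w).
Proof.
move=> cA cB; exists (cB.+2 + cA), 2, (alg cB).
move=> T e Delta d inA id col He HD Hd HdA Hid HpA HpB /=.
exact: (final Hid HD Hd HdA He HpB HpA).
Qed.
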